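(* Let $p_1=(\alpha,r,\delta)$ be a condition, $y\in\ell^2$ be nicely hypercyclic, and $U_{q,\varepsilon}$ be a basic neighborhood ($q\in\mathbb Q^{<\omega}$, $\varepsilon$ a positive rational). Then there is a condition $p_2=(\beta,s,\eta)$ such that $p_2<p_1$ and, for some $k\le|\beta|$, $B^k_{\beta^+}$ maps $y$ nicely into $U_{q,\varepsilon}$.
   Context: $\omega=\{0,1,2,\dots\}$; $\ell^2$ is the Hilbert space of square-summable real sequences indexed by $\omega$. For nonempty $q\in\mathbb Q^{<\omega}$ and rational $\varepsilon>0$, $U_{q,\varepsilon}=\{x\in\ell^2:\lVert (x\upharpoonright|q|)-q\rVert_\infty<\varepsilon|q|^{-1/2}\text{ and }\lVert x\upharpoonright[|q|,\infty)\rVert_2<\varepsilon\}$; for $q$ empty, $U_{q,\varepsilon}=\{x:\lVert x\rVert_2<\varepsilon\}$. For $w\in\{1,2\}^\omega$, $B_w(x)(i)=w(i)x(i+1)$. A function $w$ on $\omega$ is $n$-nice at $k$ if $w(i)=w(k+i)$ for all $i<n$. $B_w^k$ maps $y$ nicely into $U_{q,\varepsilon}$ if $B_w^k(y)\in U_{q,\varepsilon}$, $w$ is $|q|$-nice at $k$, and $\lVert y\upharpoonright[k+|q|,\infty)\rVert_2<\varepsilon 2^{-k}$. $y$ is nicely hypercyclic if there is $w\in\{1,2\}^\omega$ such that for every $U_{q,\varepsilon}$ some $B_w^k$ maps $y$ nicely into $U_{q,\varepsilon}$. For $\alpha\in\{1,2\}^{<\omega}$, $\alpha^+$ is $\alpha$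 followed by all $2$'s. A condition is a triple $(\alpha,r,\delta)\in\{1,2\}^{<\omega}\times\mathbb Q^{<\omega}\times(\mathbb Q\cap(0,1))$ with $|\alpha|\ge|r|$ and $\delta<2^{-|\alpha|}$. For conditions, $(\alpha_2,r_2,\delta_2)<(\alpha_1,r_1,\delta_1)$ means: $\alpha_1$ is an initial segment of $\alpha_2$; $\overline{U_{r_2,\delta_2}}\subseteq U_{r_1,\delta_1}$; and for all $k\in[|\alpha_1|,|\alpha_2|)$, $B^k_{\alpha_2^+}[U_{r_2,\delta_2}]\subseteq\{z\in\ell^2:\lVert z\rVert_2<1\}$. *)

(* Defs.v *)
From Stdlib Require Import Reals Lra List QArith Qreals.
From Coquelicot Require Import Coquelicot.
Open Scope R_scope.

Definition seqR := nat -> R.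

Definition in_l2 (x : seqR) : Prop := ex_series (fun i => (x i) ^ 2).

Definition l2norm (x : seqR) : R := sqrt (Series (fun i => (x i) ^ 2)).

Definition tail2 (n : nat) (x : seqR) : R :=
  sqrt (Series (fun i => (x (n + i)%nat) ^ 2)).

Definition head_inf_lt (q : list Q) (x : seqR) (c : R) : Prop :=
  forall i, (i < length q)%nat -> Rabs (x i - Q2R (nth i q 0%Q)) < c.

Definition Ubasic (q : list Q) (eps : Q) (x : seqR) : Prop :=
  in_l2 x /\
  match q with
  | nil => l2norm x < Q2R eps
  | _ :: _ =>
      head_inf_lt q x (Q2R eps / sqrt (INR (length q))) /\
      tail2 (length q) x < Q2R eps
  end.

Definition l2closure (A : seqR -> Prop) (x : seqR) : Prop :=
  in_l2 x /\
  forall e, 0 < e -> exists z, A z /\ l2norm (fun i => x i - z i) < e.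

Definition weight12 (w : nat -> nat) : Prop := forall i, w i = 1%nat \/ w i = 2%nat.

Definition Bw (w : nat -> nat) (x : seqR) : seqR := fun i => INR (w i) * x (S i).
Definition Bwk (w : nat -> nat) (k : nat) (x : seqR) : seqR := Nat.iter k (Bw w) x.

Definition nice (w : nat -> nat) (n k : nat) : Prop :=
  forall i, (i < n)%nat -> w i = w (k + i)%nat.

Definition maps_nicely (w : nat -> nat) (k : nat) (y : seqR) (q : list Q) (eps : Q) : Prop :=
  Ubasic q eps (Bwk w k y) /\ nice w (length q) k /\
  tail2 (k + length q) y < Q2R eps * / 2 ^ k.

Definition nicely_hypercyclic (y : seqR) : Prop :=
  in_l2 y /\
  exists w, weight12 w /\
    forall (q : list Q) (eps : Q), (0 < eps)%Q ->
      exists k, maps_nicely w k y q eps.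

Definition alpha_plus (alpha : list nat) : nat -> nat := fun i => nth i alpha 2%nat.

Definition is_condition (alpha : list nat) (r : list Q) (delta : Q) : Prop :=
  List.Forall (fun a => a = 1%nat \/ a = 2%nat) alpha /\
  (length r <= length alpha)%nat /\
  (0 < delta)%Q /\ (delta < 1)%Q /\
  Q2R delta < / 2 ^ (length alpha).

Definition cond_lt (alpha2 : list nat) (r2 : list Q) (delta2 : Q)
                   (alpha1 : list nat) (r1 : list Q) (delta1 : Q) : Prop :=
  (exists t, alpha2 = alpha1 ++ t) /\
  (forall x, l2closure (Ubasic r2 delta2) x -> Ubasic r1 delta1 x) /\
  (forall k, (length alpha1 <= k < length alpha2)%nat ->
     forall z, Ubasic r2 delta2 z -> in_l2 (Bwk (alpha_plus alpha2) k z) /\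
                                l2norm (Bwk (alpha_plus alpha2) k z) < 1).

(* Main.v *)
Require Import Defs.
From Stdlib Require Import Reals Lra Lia List QArith Qreals ZArith.
From Coquelicot Require Import Coquelicot.
Open Scope R_scope.

Lemma exs_scal (c : R) (a: nat -> R) : ex_series a -> ex_series (fun n => c * a n).
intros H. exact (@ex_series_scal_l R_AbsRing R_NormedModule c a H). Qed.
Lemma exs_plus (a b: nat -> R) : ex_series a -> ex_series b -> ex_series (fun n => a n + b n).
intros. exact (@ex_series_plus R_AbsRing R_NormedModule a b H H0). Qed.
Lemma exs_S (a: nat -> R) : ex_series a -> ex_series (fun n => a (S n)).
intros H. apply (@ex_series_incr_1 R_AbsRing R_NormedModule) in H. exact H. Qed.
Lemma exs_le (a b: nat -> R) : (forall n, Rabs (a n) <= b n) -> ex_series b -> ex_series a.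
intros H1 H2. apply (@ex_series_le R_AbsRing R_CompleteNormedModule) with b. exact H1. exact H2. Qed.

Lemma Series_nonneg0 (a : nat -> R) : (forall n, 0 <= a n) -> ex_series a -> 0 <= Series a.
Proof.
  intros H1 H2. assert (E: Series (fun n => 0 * a n) = 0 * Series a) by apply Series_scal_l.
  assert (Series (fun n => 0 * a n) <= Series a).
  { apply Series_le; auto. intros n; specialize (H1 n); split; lra. }
  lra.
Qed.

Definition T (m : nat) (x : seqR) : R := Series (fun i => (x (m + i)%nat) ^ 2).

Lemma exs_shift (x : seqR) m : in_l2 x -> ex_series (fun i => (x (m + i)%nat) ^ 2).
Proof.
  intros H. induction m as [|m IH]. exact H.
  apply exs_S in IH. eapply ex_series_ext; [|exact IH]. intros n; simpl.
  now replace (m + S n)%nat with (S (m + n))%nat by lia.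
Qed.

Lemma T_nonneg x m : in_l2 x -> 0 <= T m x.
Proof. intros H. apply Series_nonneg0. intros; apply pow2_ge_0. now apply exs_shift. Qed.

Lemma T_step x m : in_l2 x -> T m x = (x m) ^ 2 + T (S m) x.
Proof.
  intros H. unfold T. rewrite Series_incr_1 by (now apply exs_shift).
  rewrite Nat.add_0_r. f_equal. apply Series_ext. intros n.
  now replace (m + S n)%nat with (S m + n)%nat by lia.
Qed.

Lemma T_mono x m d : in_l2 x -> T (m + d) x <= T m x.
Proof.
  intros H. induction d as [|d IH]. rewrite Nat.add_0_r; lra.
  replace (m + S d)%nat with (S (m + d)) by lia.
  rewrite (T_step x (m + d)) in IH by exact H. pose proof (pow2_ge_0 (x (m+d)%nat)). lra.
Qed.

Lemma T_mono' x m m' : in_l2 x -> (m <= m')%nat -> T m' x <= T m x.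
Proof. intros H Hm. replace m' with (m + (m' - m))%nat by lia. now apply T_mono. Qed.

Lemma abs_sqrt (a : R) : Rabs a = sqrt (a ^ 2).
Proof. rewrite <- pow2_abs. rewrite sqrt_pow2; auto. apply Rabs_pos. Qed.

Lemma coord_le x m j : in_l2 x -> (m <= j)%nat -> Rabs (x j) <= tail2 m x.
Proof.
  intros H Hj. rewrite abs_sqrt. unfold tail2. apply sqrt_le_1_alt.
  fold (T m x). pose proof (T_mono' x m j H Hj). rewrite (T_step x j H) in H0.
  pose proof (T_nonneg x (S j) H). lra.
Qed.

Fixpoint prodn (f : nat -> nat) (i k : nat) : nat :=
  match k with O => 1%nat | S k' => (f i * prodn f (S i) k')%nat end.

Lemma prodn_split f a b i : prodn f i (a + b) = (prodn f i a * prodn f (i + a) b)%nat.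
Proof.
  revert i. induction a as [|a IH]; intros i; simpl.
  - rewrite !Nat.add_0_r; reflexivity.
  - rewrite IH. replace (S i + a)%nat with (i + S a)%nat by lia. lia.
Qed.

Lemma prodn_ext f g i k : (forall j, (i <= j < i + k)%nat -> f j = g j) -> prodn f i k = prodn g i k.
Proof.
  revert i. induction k as [|k IH]; intros i H; simpl; auto.
  rewrite (H i) by lia. rewrite IH; auto. intros j Hj; apply H; lia.
Qed.

Lemma prodn_rot f i K : (forall j, f j <> 0%nat) -> (forall j, (j < i)%nat -> f (K + j)%nat = f j) ->
  prodn f i K = prodn f 0 K.
Proof.
  intros Hnz. induction i as [|i IH]; intros H; auto.
  rewrite <- IH by (intros; apply H; lia).
  pose proof (prodn_split f K 1 i) as E1. rewrite Nat.add_1_r in E1. simpl in E1.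
  rewrite Nat.mul_1_r in E1. replace (i + K)%nat with (K + i)%nat in E1 by lia.
  rewrite H in E1 by lia. rewrite (Nat.mul_comm (prodn f i K)) in E1.
  apply Nat.mul_cancel_l in E1; auto.
Qed.

Lemma prodn_bounds f i k : (forall j, (1 <= f j <= 2)%nat) -> (1 <= prodn f i k <= 2 ^ k)%nat.
Proof.
  revert i. induction k as [|k IH]; intros i H; simpl. lia.
  specialize (IH (S i) H). specialize (H i). nia.
Qed.

Lemma Bwk_formula w k x i : Bwk w k x i = INR (prodn w i k) * x (i + k)%nat.
Proof.
  revert i. induction k as [|k IH]; intros i.
  - simpl. rewrite Nat.add_0_r. lra.
  - unfold Bwk in *. simpl. unfold Bw at 1. rewrite IH. rewrite mult_INR.
    replace (S i + k)%nat with (i + S k)%nat by lia. lra.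
Qed.

Lemma Bwk_sq_le w k x i : (forall j, (1 <= w j <= 2)%nat) ->
  (Bwk w k x i) ^ 2 <= (2 ^ k) ^ 2 * (x (i + k)%nat) ^ 2.
Proof.
  intros H. rewrite Bwk_formula. pose proof (prodn_bounds w i k H) as [H1 H2].
  apply le_INR in H2. rewrite pow_INR in H2. simpl INR in H2.
  apply le_INR in H1. simpl in H1.
  rewrite Rpow_mult_distr. apply Rmult_le_compat_r. apply pow2_ge_0.
  apply pow_incr. replace (1+1) with 2 in H2 by ring. lra.
Qed.

Lemma Bwk_tail w k x m : in_l2 x -> (forall j, (1 <= w j <= 2)%nat) ->
  ex_series (fun i => (Bwk w k x (m + i)%nat) ^ 2) /\ tail2 m (Bwk w k x) <= 2 ^ k * tail2 (m + k) x.
Proof.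
  intros Hx Hw.
  assert (Hb : ex_series (fun i => (2 ^ k) ^ 2 * (x (m + k + i)%nat) ^ 2)).
  { apply exs_scal. now apply exs_shift. }
  assert (Hle : forall i, 0 <= (Bwk w k x (m + i)%nat) ^ 2 <= (2 ^ k) ^ 2 * (x (m + k + i)%nat) ^ 2).
  { intros i. split. apply pow2_ge_0. replace (m + k + i)%nat with (m + i + k)%nat by lia.
    now apply Bwk_sq_le. }
  split.
  - apply exs_le with (2:=Hb). intros n. rewrite Rabs_right. apply Hle. apply Rle_ge, Hle.
  - unfold tail2. rewrite <- (sqrt_pow2 (2 ^ k)) at 1 by (apply pow_le; lra).
    rewrite <- sqrt_mult_alt by (apply pow2_ge_0).
    apply sqrt_le_1_alt. rewrite <- Series_scal_l. apply Series_le; auto.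
Qed.

Lemma sq_of_sqrt_lt a b : 0 <= a -> sqrt a < b -> a < b ^ 2.
Proof. intros H1 H2. pose proof (pow2_sqrt a H1). pose proof (sqrt_pos a). nra. Qed.

Lemma sqrt_lt_of a b : 0 <= a -> 0 <= b -> a < b ^ 2 -> sqrt a < b.
Proof. intros H1 H2 H3. rewrite <- (sqrt_pow2 b H2). apply sqrt_lt_1_alt. lra. Qed.

Lemma Ubasic_tail r e z : Ubasic r e z -> in_l2 z /\ tail2 (length r) z < Q2R e.
Proof. destruct r as [|a r]; intros [H1 H2]; split; auto. apply H2. Qed.

Lemma Tsum_le x z m : in_l2 x -> in_l2 z ->
  T m x <= 2 * T m z + 2 * T m (fun i => x i - z i).
Proof.
  intros Hx Hz.
  assert (Hd : in_l2 (fun i => x i - z i)).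
  { unfold in_l2. apply exs_le with (fun i => 2 * x i ^ 2 + 2 * z i ^ 2).
    intros n. rewrite Rabs_right by (apply Rle_ge, pow2_ge_0). pose proof (pow2_ge_0 (x n + z n)). nra.
    apply exs_plus; apply exs_scal; auto. }
  unfold T. rewrite <- !Series_scal_l. rewrite <- Series_plus.
  2,3: apply exs_scal; first [apply (exs_shift z) | apply (exs_shift (fun i => x i - z i))]; auto.
  apply Series_le. intros n. split. apply pow2_ge_0. pose proof (pow2_ge_0 (2 * z (m+n)%nat - x (m+n)%nat)). nra.
  apply exs_plus; apply exs_scal; first [apply (exs_shift z) | apply (exs_shift (fun i => x i - z i))]; auto.
Qed.

Lemma closure_sub r eta delta : 0 <= Q2R eta -> Q2R eta < Q2R delta / 2 ->
  forall x, l2closure (Ubasic r eta) x -> Ubasic r delta x.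
Proof.
  intros He0 Hed x [Hx Hc].
  set (s := sqrt (INR (length r))).
  assert (Hs : 0 <= s) by apply sqrt_pos.
  set (e := Q2R delta / (2 * (s + 1))).
  assert (He : 0 < e). { unfold e. apply Rdiv_lt_0_compat; lra. }
  assert (Hed2 : e <= Q2R delta / 2).
  { unfold e. unfold Rdiv. apply Rmult_le_compat_l. lra.
    apply Rinv_le_contravar; lra. }
  destruct (Hc e He) as [z [Hz Hd]].
  destruct (Ubasic_tail _ _ _ Hz) as [Hzl Hzt].
  set (d := fun i => x i - z i) in *.
  assert (Hdl : in_l2 d).
  { unfold in_l2. apply exs_le with (fun i => 2 * x i ^ 2 + 2 * z i ^ 2).
    intros n. rewrite Rabs_right by (apply Rle_ge, pow2_ge_0). unfold d. pose proof (pow2_ge_0 (x n + z n)). nra.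
    apply exs_plus; apply exs_scal; auto. }
  assert (Htail : tail2 (length r) x < Q2R delta).
  { unfold tail2. fold (T (length r) x). apply sqrt_lt_of. now apply T_nonneg. lra.
    pose proof (Tsum_le x z (length r) Hx Hzl) as H1. fold d in H1.
    assert (H2 : T (length r) z < Q2R eta ^ 2).
    { apply sq_of_sqrt_lt. now apply T_nonneg. exact Hzt. }
    assert (H3 : T (length r) d < e ^ 2).
    { pose proof (T_mono d 0 (length r) Hdl) as H4. simpl in H4.
      assert (T 0 d < e ^ 2). { apply sq_of_sqrt_lt. now apply T_nonneg. exact Hd. }
      lra. }
    pose proof (T_nonneg z (length r) Hzl). pose proof (T_nonneg d (length r) Hdl).
    nra. }
  destruct r as [|a r].
  - split; auto.
  - split; auto. split; auto.
    intros i Hi.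
    assert (Hsp : 0 < s). { unfold s. apply sqrt_lt_R0. apply lt_0_INR. lia. }
    destruct Hz as [_ [Hzh _]]. specialize (Hzh i Hi). fold s in Hzh.
    assert (Hdi : Rabs (d i) < e).
    { pose proof (coord_le d 0 i Hdl ltac:(lia)). change (tail2 0 d) with (l2norm d) in H.
      lra. }
    replace (x i - Q2R (nth i (a :: r) 0%Q)) with ((z i - Q2R (nth i (a :: r) 0%Q)) + d i)
      by (unfold d; ring).
    eapply Rle_lt_trans. apply Rabs_triang.
    assert (Q2R eta / s < Q2R delta / (2 * s)).
    { replace (Q2R delta / (2 * s)) with ((Q2R delta / 2) * / s) by (field; lra). unfold Rdiv at 1. apply Rmult_lt_compat_r. apply Rinv_0_lt_compat; lra. lra. }
    assert (e <= Q2R delta / (2 * s)).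
    { unfold e, Rdiv. apply Rmult_le_compat_l. lra. apply Rinv_le_contravar; lra. }
    assert (Q2R delta / (2 * s) + Q2R delta / (2 * s) = Q2R delta / s) by (field; lra).
    fold s. lra.
Qed.

Lemma Q2R_frac a b : (b <> 0)%nat -> Q2R (Z.of_nat a # Pos.of_nat b) = INR a / INR b.
Proof.
  intros Hb. unfold Q2R. simpl. rewrite <- (Znat.positive_nat_Z (Pos.of_nat b)).
  rewrite Nat2Pos.id by exact Hb. rewrite <- !INR_IZR_INZ. reflexivity.
Qed.

Lemma Q2R_zero : Q2R 0%Q = 0.
Proof. unfold Q2R; simpl; lra. Qed.

Lemma Q2R_int z : Q2R (z # 1) = IZR z.
Proof. unfold Q2R; simpl. lra. Qed.

Lemma nth_Forall {A} (P : A -> Prop) (l : list A) (d : A) j : List.Forall P l -> P d -> P (nth j l d).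
Proof.
  intros H Hd. revert j. induction H; intros j; destruct j; simpl; auto.
Qed.

Lemma tail_mono x m m' : in_l2 x -> (m <= m')%nat -> tail2 m' x <= tail2 m x.
Proof. intros H Hm. apply sqrt_le_1_alt. now apply T_mono'. Qed.

Lemma div_le_self a s : 0 <= a -> 1 <= s -> a / s <= a.
Proof.
  intros Ha Hs. unfold Rdiv. rewrite <- (Rmult_1_r a) at 2. apply Rmult_le_compat_l; auto.
  rewrite <- Rinv_1. apply Rinv_le_contravar; lra.
Qed.

Lemma sqrt_ge1 n : (1 <= n)%nat -> 1 <= sqrt (INR n).
Proof.
  intros H. rewrite <- sqrt_1. apply sqrt_le_1_alt. apply (le_INR 1). exact H.
Qed.

Theorem lemma11 (alpha : list nat) (r : list Q) (delta : Q)
  (y : nat -> R) (q : list Q) (eps : Q) :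
  is_condition alpha r delta ->
  nicely_hypercyclic y ->
  (0 < eps)%Q ->
  exists (beta : list nat) (s : list Q) (eta : Q),
    is_condition beta s eta /\
    cond_lt beta s eta alpha r delta /\
    exists k, (k <= length beta)%nat /\ maps_nicely (alpha_plus beta) k y q eps.
Proof.
  intros [Hal [Hrl [Hd0 [Hd1 Hd2]]]] [Hy [w [Hw Hwit]]] Heps.
  apply Qlt_Rlt in Hd0, Hd1, Heps. rewrite Q2R_zero in Hd0, Heps.
  set (L := length alpha). set (n := length q).
  assert (Hwb : forall j, (1 <= w j <= 2)%nat) by (intros j; destruct (Hw j); lia).
  assert (Hab : forall j, (1 <= alpha_plus alpha j <= 2)%nat).
  { intros j. unfold alpha_plus.
    assert (nth j alpha 2%nat = 1%nat \/ nth j alpha 2%nat = 2%nat).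
    { apply (nth_Forall (fun a => a = 1%nat \/ a = 2%nat)); auto. }
    lia. }
  set (A := (prodn (alpha_plus alpha) 0 L * w 0%nat)%nat).
  set (Bn := prodn w 0 L).
  assert (HA : (1 <= A)%nat).
  { unfold A. pose proof (prodn_bounds _ 0 L Hab). specialize (Hwb 0%nat). nia. }
  assert (HB : (1 <= Bn)%nat).
  { unfold Bn. pose proof (prodn_bounds _ 0 L Hwb). lia. }
  set (eps' := (eps * (Z.of_nat 1 # Pos.of_nat (2 * A)))%Q).
  assert (Heps'v : Q2R eps' = Q2R eps / (2 * INR A)).
  { unfold eps'. rewrite Q2R_mult, Q2R_frac by lia. rewrite mult_INR. simpl (INR 1).
    simpl (INR 2). field. apply not_0_INR. lia. }
  assert (HAr : 1 <= INR A) by (apply (le_INR 1); lia).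
  assert (HBr : 1 <= INR Bn) by (apply (le_INR 1); lia).
  assert (Heps'p : 0 < Q2R eps').
  { rewrite Heps'v. apply Rdiv_lt_0_compat; lra. }
  assert (Heps'2 : 2 * Q2R eps' <= Q2R eps).
  { rewrite Heps'v. replace (2 * (Q2R eps / (2 * INR A))) with (Q2R eps / INR A) by (field; lra).
    apply div_le_self; lra. }
  set (cinv := (Z.of_nat Bn # Pos.of_nat A)).
  set (qq := map (fun a => (a * cinv)%Q) q).
  set (X := 2 ^ (L + n) * l2norm y + Q2R eps').
  set (Bq := (up X # 1)%Q).
  set (Qt := Bq :: qq).
  assert (HlenQt : length Qt = S n) by (simpl; unfold qq; now rewrite length_map).
  assert (Heps'Q : (0 < eps')%Q). { apply Rlt_Qlt. rewrite Q2R_zero. exact Heps'p. }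
  destruct (Hwit Qt eps' Heps'Q) as [k [HU [Hnice Htl]]].
  rewrite HlenQt in Hnice, Htl.
  destruct HU as [_ [Hhead _]]. rewrite HlenQt in Hhead.
  assert (Hk : (L + n <= k)%nat).
  { destruct (le_lt_dec (L + n) k) as [H|H]; auto. exfalso.
    specialize (Hhead 0%nat ltac:(lia)). simpl nth in Hhead. unfold Bq in Hhead.
    rewrite Q2R_int in Hhead.
    assert (Hs1 : Q2R eps' / sqrt (INR (S n)) <= Q2R eps').
    { apply div_le_self. lra. apply sqrt_ge1. lia. }
    assert (HB1 : Rabs (Bwk w k y 0%nat) <= 2 ^ (L + n) * l2norm y).
    { rewrite Bwk_formula. rewrite Rabs_mult. rewrite Rabs_right by (apply Rle_ge, pos_INR).
      pose proof (prodn_bounds w 0 k Hwb) as [_ Hp]. apply le_INR in Hp.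
      rewrite pow_INR in Hp. replace (INR 2) with 2 in Hp by (simpl; ring).
      assert (Hpk : 2 ^ k <= 2 ^ (L + n)) by (apply Rle_pow; lia || lra).
      pose proof (coord_le y 0 (0 + k) Hy ltac:(lia)) as Hc.
      change (tail2 0 y) with (l2norm y) in Hc.
      pose proof (Rabs_pos (y (0 + k)%nat)).
      assert (0 <= l2norm y) by apply sqrt_pos.
      assert (0 <= INR (prodn w 0 k)) by apply pos_INR.
      apply Rle_trans with (2 ^ k * Rabs (y (0 + k)%nat)). apply Rmult_le_compat_r; lra.
      apply Rmult_le_compat; try lra. }
    destruct (archimed X) as [Hup _]. assert (HX0 : 0 <= X) by (unfold X; pose proof (sqrt_pos (Series (fun i => y i ^ 2))); assert (0 < 2 ^ (L + n)) by (apply pow_lt; lra); unfold l2norm; nra).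
    pose proof (Rabs_triang_inv (IZR (up X)) (Bwk w k y 0%nat)). rewrite (Rabs_right (IZR (up X))) in H0 by lra.

    rewrite Rabs_minus_sym in Hhead.
    assert (HXv : X = 2 ^ (L + n) * l2norm y + Q2R eps') by reflexivity. lra. }
  set (K := S k).
  set (M := (K + n - L)%nat).
  set (h := fun j => if Nat.ltb j L then nth j alpha 2%nat else w j).
  set (g := fun j => if Nat.ltb j K then h j else h (j - K)%nat).
  set (beta := alpha ++ map g (seq L M)).
  assert (Hlenb : length beta = (K + n)%nat).
  { unfold beta. rewrite length_app, length_map, length_seq. unfold M, K. fold L. lia. }
  assert (Hbeta : forall j, (j < K + n)%nat -> alpha_plus beta j = g j).
  { intros j Hj. unfold alpha_plus, beta. destruct (Nat.ltb_spec j L).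
    - rewrite app_nth1 by exact H. unfold g, h.
      destruct (Nat.ltb_spec j K); [|unfold K in *; lia].
      destruct (Nat.ltb_spec j L); [reflexivity|lia].
    - rewrite app_nth2 by (fold L; lia). fold L.
      rewrite (nth_indep _ _ (g 0%nat)) by (rewrite length_map, length_seq; unfold M; lia).
      rewrite map_nth. rewrite seq_nth by (unfold M; lia). f_equal. lia. }
  assert (Hhb : forall j, h j = 1%nat \/ h j = 2%nat).
  { intros j. unfold h. destruct (Nat.ltb_spec j L).
    apply (nth_Forall (fun a => a = 1%nat \/ a = 2%nat)); auto. apply Hw. }
  assert (HFb : List.Forall (fun a => a = 1%nat \/ a = 2%nat) beta).
  { unfold beta. apply Forall_app. split; auto. apply Forall_map.
    apply Forall_forall. intros j _. unfold g. destruct (Nat.ltb j K); apply Hhb. }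
  assert (Hbb : forall j, (1 <= alpha_plus beta j <= 2)%nat).
  { intros j. unfold alpha_plus.
    assert (nth j beta 2%nat = 1%nat \/ nth j beta 2%nat = 2%nat).
    { apply (nth_Forall (fun a => a = 1%nat \/ a = 2%nat)); auto. }
    lia. }
  set (eta := (delta * (Z.of_nat 1 # Pos.of_nat (2 * 2 ^ (K + n))))%Q).
  assert (H2pos : 0 < 2 ^ (K + n)) by (apply pow_lt; lra).
  assert (H2ge : 1 <= 2 ^ (K + n)) by (apply pow_R1_Rle; lra).
  assert (Hetav : Q2R eta = Q2R delta / (2 * 2 ^ (K + n))).
  { unfold eta. rewrite Q2R_mult, Q2R_frac.
    rewrite mult_INR, pow_INR. simpl (INR 1). replace (INR 2) with 2 by (simpl; ring).
    field. lra. apply Nat.neq_mul_0. split. lia. apply Nat.pow_nonzero. lia. }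
  assert (Heta0 : 0 < Q2R eta) by (rewrite Hetav; apply Rdiv_lt_0_compat; lra).
  assert (Hetab : Q2R eta * 2 ^ (K + n) < 1).
  { rewrite Hetav. replace (Q2R delta / (2 * 2 ^ (K + n)) * 2 ^ (K + n)) with (Q2R delta / 2)
      by (field; lra). lra. }
  assert (Hetad : Q2R eta < Q2R delta / 2).
  { rewrite Hetav. unfold Rdiv. apply Rmult_lt_compat_l. lra.
    assert (1 < 2 ^ (K + n)) by (apply Rlt_pow_R1; [lra | unfold K; lia]). apply Rinv_lt_contravar. nra. nra. }
  exists beta, r, eta.
  split; [|split].
  -
    split; [exact HFb|]. split; [rewrite Hlenb; fold L in Hrl; unfold K; lia|].
    split; [apply Rlt_Qlt; rewrite Q2R_zero; lra|].
    split; [apply Rlt_Qlt; replace (Q2R 1) with 1 by (unfold Q2R; simpl; lra);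
            pose proof (Rinv_le_contravar 1 _ Rlt_0_1 H2ge); rewrite Rinv_1 in *; nra|].
    rewrite Hlenb. apply Rmult_lt_reg_r with (2 ^ (K + n)); auto.
    rewrite Rinv_l by lra. lra.
  -
    split; [exists (map g (seq L M)); reflexivity|]. split.
    + apply closure_sub; lra.
    + intros k' Hk' z Hz. rewrite Hlenb in Hk'. fold L in Hk'.
      destruct (Ubasic_tail _ _ _ Hz) as [Hzl Hzt].
      destruct (Bwk_tail (alpha_plus beta) k' z 0 Hzl Hbb) as [Hex Hle].
      split; [exact Hex|].
      change (l2norm (Bwk (alpha_plus beta) k' z)) with (tail2 0 (Bwk (alpha_plus beta) k' z)).
      simpl (0 + k')%nat in Hle.
      assert (tail2 k' z <= tail2 (length r) z) by (apply tail_mono; auto; fold L in Hrl; lia).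
      assert (Hp : 2 ^ k' <= 2 ^ (K + n)) by (apply Rle_pow; lra || lia).
      assert (0 <= tail2 k' z) by apply sqrt_pos.
      assert (0 < 2 ^ k') by (apply pow_lt; lra).
      assert (2 ^ k' * tail2 k' z <= 2 ^ k' * Q2R eta) by (apply Rmult_le_compat_l; lra).
      assert (2 ^ k' * Q2R eta <= 2 ^ (K + n) * Q2R eta) by (apply Rmult_le_compat_r; lra).
      lra.
  -
    exists K. split; [rewrite Hlenb; lia|].
    assert (H2K : 2 ^ K = 2 * 2 ^ k) by reflexivity.
    assert (H2k : 0 < 2 ^ k) by (apply pow_lt; lra).
    assert (Htl' : tail2 (K + n) y < Q2R eps * / 2 ^ K).
    { replace (K + n)%nat with (k + S n)%nat by (unfold K; lia).
      eapply Rlt_le_trans. exact Htl. rewrite H2K.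
      replace (Q2R eps' * / 2 ^ k) with ((2 * Q2R eps') * / (2 * 2 ^ k)) by (field; lra).
      apply Rmult_le_compat_r. left; apply Rinv_0_lt_compat; lra. lra. }
    destruct (Bwk_tail (alpha_plus beta) K y n Hy Hbb) as [_ Htb].
    assert (Htail : tail2 n (Bwk (alpha_plus beta) K y) < Q2R eps).
    { replace (n + K)%nat with (K + n)%nat in Htb by lia.
      assert (2 ^ K * tail2 (K + n) y < 2 ^ K * (Q2R eps * / 2 ^ K)).
      { apply Rmult_lt_compat_l. lra. exact Htl'. }
      replace (2 ^ K * (Q2R eps * / 2 ^ K)) with (Q2R eps) in H by (field; lra). lra. }
    destruct (Bwk_tail (alpha_plus beta) K y 0 Hy Hbb) as [Hin _].
    split; [|split].
    +
      destruct q as [|q0 q1] eqn:Eq.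
      * split; [exact Hin|]. exact Htail.
      * split; [exact Hin|]. split; [|exact Htail].
        intros i Hi. fold n in Hi |- *.
        assert (Hg1 : forall j, (j < n)%nat -> alpha_plus beta (K + j)%nat = alpha_plus beta j).
        { intros j Hj. rewrite !Hbeta by lia. unfold g.
          destruct (Nat.ltb_spec (K + j) K); [lia|].
          destruct (Nat.ltb_spec j K); [|unfold K in *; lia]. f_equal. lia. }
        assert (Hpb : prodn (alpha_plus beta) i K = prodn (alpha_plus beta) 0 K).
        { apply prodn_rot. intros j; specialize (Hbb j); lia. intros j Hj; apply Hg1; lia. }
        assert (Hpw : prodn w (S i) k = prodn w 0 k).
        { apply prodn_rot. intros j; specialize (Hwb j); lia.
          intros j Hj. symmetry. apply Hnice. lia. }
        assert (Hprod : (prodn (alpha_plus beta) 0 K * Bn = A * prodn w 0 k)%nat).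
        { rewrite (prodn_ext (alpha_plus beta) h 0 K).
          2:{ intros j Hj. rewrite Hbeta by lia. unfold g.
              destruct (Nat.ltb_spec j K); [reflexivity|lia]. }
          unfold K. replace (S k) with (k + 1)%nat by lia. rewrite prodn_split. simpl prodn.
          replace k with (L + (k - L))%nat by lia. rewrite !prodn_split.
          rewrite (prodn_ext h (alpha_plus alpha) 0 L).
          2:{ intros j Hj. unfold h. destruct (Nat.ltb_spec j L); [reflexivity|lia]. }
          rewrite (prodn_ext h w (0 + L) (k - L)).
          2:{ intros j Hj. unfold h. destruct (Nat.ltb_spec j L); [lia|reflexivity]. }
          assert (Hhk : h (L + (k - L))%nat = w 0%nat).
          { replace (L + (k - L))%nat with k by lia. unfold h.
            destruct (Nat.ltb_spec k L); [lia|]. replace k with (k + 0)%nat at 1 by lia.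
            symmetry. apply Hnice. lia. }
          rewrite Hhk. unfold A, Bn. simpl (0 + L)%nat. ring. }
        specialize (Hhead (S i) ltac:(lia)).
        rewrite Bwk_formula, Hpw in Hhead. rewrite Bwk_formula, Hpb.
        replace (i + K)%nat with (S i + k)%nat by (unfold K; lia).
        change (nth (S i) Qt 0%Q) with (nth i qq 0%Q) in Hhead.
        assert (Hn : nth i qq 0%Q = (nth i (q0::q1) 0%Q * cinv)%Q).
        { unfold qq. rewrite (nth_indep _ 0%Q ((0 * cinv)%Q)) by (rewrite length_map; exact Hi).
          exact (map_nth (fun a => (a * cinv)%Q) (q0::q1) 0%Q i). }
        rewrite Hn in Hhead. rewrite Q2R_mult in Hhead. unfold cinv in Hhead.
        rewrite Q2R_frac in Hhead by lia.
        apply (f_equal INR) in Hprod. rewrite !mult_INR in Hprod.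
        set (Pb := INR (prodn (alpha_plus beta) 0 K)) in *.
        set (Pw := INR (prodn w 0 k)) in *.
        set (a := INR A) in *. set (b := INR Bn) in *.
        set (Y := y (S i + k)%nat) in *.
        set (qi := Q2R (nth i (q0 :: q1) 0%Q)) in *.
        assert (Hsn : 0 < sqrt (INR n)) by (apply sqrt_lt_R0; apply lt_0_INR; lia).
        assert (Hsn2 : sqrt (INR n) <= sqrt (INR (S n))) by (apply sqrt_le_1_alt; apply le_INR; lia).
        clearbody Pb Pw a b Y qi.
        assert (HPb : Pb = a * Pw / b) by (rewrite <- Hprod; field; lra).
        replace (Pb * Y - qi) with ((a / b) * (Pw * Y - qi * (b / a))) by (rewrite HPb; field; lra).
        rewrite Rabs_mult. rewrite (Rabs_right (a / b)) by (apply Rle_ge; apply Rlt_le, Rdiv_lt_0_compat; lra).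
        apply Rlt_le_trans with ((a / b) * (Q2R eps' / sqrt (INR (S n)))).
        { apply Rmult_lt_compat_l. apply Rdiv_lt_0_compat; lra. exact Hhead. }
        rewrite Heps'v.
        replace (a / b * (Q2R eps / (2 * a) / sqrt (INR (S n)))) with (Q2R eps * / (2 * b * sqrt (INR (S n))))
          by (field; repeat split; lra).
        unfold Rdiv. apply Rmult_le_compat_l. lra. apply Rinv_le_contravar. lra. nra.
    +
      intros i Hi. fold n in Hi. symmetry. rewrite !Hbeta by lia. unfold g.
      destruct (Nat.ltb_spec (K + i) K); [lia|].
      destruct (Nat.ltb_spec i K); [|unfold K in *; lia]. f_equal. lia.
    + exact Htl'.
Qed.
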